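(* Let $\mathbf{q}$ be any point on the line $\mathcal{L}$ satisfying $q_{\min} \leq q_{d} \leq q_{\max}$, and define \[ \mu(\mathbf{q}) := 1-\frac{(q_d-q_{\min})(1-\overline{\mu})}{q_{\max}-q_{\min}} ~. \] Then $\mu(\mathbf{q})\geq\overline{\mu}$, and the reduced convex hull of $\mathcal{P}^-$ is exactly equal to the following non-empty line segment of $\mathcal{L}$: \[ \mathrm{conv}_{\mu(\mathbf{q})}(\mathcal{P}^-) = \left[\mathbf{q},\mathbf{u}_{\mathrm{left}}+\mathbf{u}_{\mathrm{right}}-\mathbf{q}\right] \subseteq \{\mathbf{x}\in\mathcal{L} : x_d \geq q_{d}\} . \]
   Context: Let $\mathcal{S}:=\{\mathbf{x}\in\mathbb{R}^d: x_1=\ldots=x_{d-2}=0\}$ and $\mathcal{L}:=\{(0,\ldots,0,2,y)^T:y\in\mathbb{R}\}\subseteq\mathcal{S}$. For a finite point set $\mathcal{P}$ and $\frac{1}{|\mathcal{P}|}\le\mu\le1$, the reduced convex hull is $\mathrm{conv}_\mu(\mathcal{P}):=\{\sum_{p\in\mathcal{P}}\alpha_p p: 0\le\alpha_p\le\mu,\ \sum_p\alpha_p=1\}$. In the construction, $\overline{\mu}$ is a constant with $\frac12\le\overline{\mu}<1$ (defined as $\max\{\frac12,\max_{\sigma}\mu_\sigma^{(\delta)}\}$, the maximum over $\sigma\in\{-1,1\}^d$ with $\sigma_{d-1}=\sigma_d=1$ of the largest coefficient in the unique convex combination of the point $\mathbf{p}_\sigma^{(\delta)}$ in terms of vertices of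 the stretched dual Goldfarb cube), and $q_{\min}<q_{\max}$ are finite reals (the minimum and maximum of the last coordinates $q_{\sigma,d}$ of the constructed points $\mathbf{q}_\sigma\in\mathcal{L}$ over those $\sigma$). The second point class is $\mathcal{P}^-:=\{\mathbf{u}_{\mathrm{left}},\mathbf{u}_{\mathrm{right}}\}$ with $\mathbf{u}_{\mathrm{left}}:=(0,\ldots,0,2,q_{\min})^T$ and $\mathbf{u}_{\mathrm{right}}:=(0,\ldots,0,2,q_{\min}+\frac{q_{\max}-q_{\min}}{1-\overline{\mu}})^T$. *)

(* Defs.v *)
From mathcomp Require Import all_boot all_order all_algebra.
Set Implicit Arguments. Unset Strict Implicit. Unset Printing Implicit Defensive.
Import Order.TTheory GRing.Theory Num.Theory.
Local Open Scope ring_scope.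

(* Ambient dimension d = n.+2 (so d >= 2); points are row vectors 'rV[R]_d.
   Coordinates are 0-indexed: x_d is index ord_max = d-1, x_{d-1} is index n = d-2. *)

Section Defs.
Variable R : realFieldType.
Variable n : nat.
Local Notation V := 'rV[R]_(n.+2).

Definition xcoord (x : V) (k : nat) : R := x 0 (inord k.-1).

Definition pt2 (a b : R) : V :=
  \row_(i < n.+2) (if val i == n.+1 then b else if val i == n then a else 0).

Definition inS (x : V) : Prop := forall k : 'I_(n.+2), (k < n)%N -> x 0 k = 0.
Definition inL (x : V) : Prop := exists y : R, x = pt2 2 y.

(* reduced convex hull of a finite point set P (given by a list; duplicates ignored) *)
Definition conv_mu (P : seq V) (mu : R) (x : V) : Prop :=
  exists alpha : V -> R,
    [/\ forall p, p \in P -> 0 <= alpha p <= mu,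
        \sum_(p <- undup P) alpha p = 1
      & x = \sum_(p <- undup P) alpha p *: p].

Definition segment (a b : V) (x : V) : Prop :=
  exists t : R, 0 <= t <= 1 /\ x = (1 - t) *: a + t *: b.

Definition u_left (qmin : R) : V := pt2 2 qmin.
Definition u_right (mubar qmin qmax : R) : V :=
  pt2 2 (qmin + (qmax - qmin) / (1 - mubar)).
Definition Pminus (mubar qmin qmax : R) : seq V :=
  [:: u_left qmin; u_right mubar qmin qmax].

Definition mu_q (mubar qmin qmax : R) (q : V) : R :=
  1 - (xcoord q n.+2 - qmin) * (1 - mubar) / (qmax - qmin).

End Defs.

(* Main.v *)
Require Import Defs.
From mathcomp Require Import all_boot all_order all_algebra.
From mathcomp Require Import ring lra.
Import Order.TTheory GRing.Theory Num.Theory.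
Local Open Scope ring_scope.

Section H.
Variable R : realFieldType.
Variable n : nat.

Lemma pt2_lin (a b x1 y1 x2 y2 : R) :
  a *: pt2 n x1 y1 + b *: pt2 n x2 y2 = pt2 n (a*x1+b*x2) (a*y1+b*y2).
Proof.
apply/rowP => i; rewrite !mxE.
case: (val i == n.+1) => /=; first by [].
case: (val i == n) => /=; first by [].
by rewrite !mulr0 addr0.
Qed.

Lemma pt2_sub (x1 y1 x2 y2 x3 y3 : R) :
  pt2 n x1 y1 + pt2 n x2 y2 - pt2 n x3 y3 = pt2 n (x1+x2-x3) (y1+y2-y3).
Proof.
apply/rowP => i; rewrite !mxE.
case: (val i == n.+1) => /=; first by [].
case: (val i == n) => /=; first by [].
by rewrite oppr0 !addr0.
Qed.

Lemma pt2_xd (a b : R) : xcoord (pt2 n a b) n.+2 = b.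
Proof. by rewrite /xcoord /pt2 mxE /= inordK // eqxx. Qed.

Lemma pt2_inj (a b : R) : pt2 n 2 a = pt2 n 2 b -> a = b.
Proof. by move=> h; rewrite -(pt2_xd 2 a) h pt2_xd. Qed.
End H.

Theorem lemma6 (R : realFieldType) (n : nat) (mubar qmin qmax : R)
  (hmu1 : 1 / 2 <= mubar) (hmu2 : mubar < 1) (hq : qmin < qmax)
  (q : 'rV[R]_(n.+2))
  (hqL : inL q) (hq1 : qmin <= xcoord q n.+2) (hq2 : xcoord q n.+2 <= qmax) :
  mubar <= mu_q mubar qmin qmax q /\
  (forall x : 'rV[R]_(n.+2),
     conv_mu (Pminus n mubar qmin qmax) (mu_q mubar qmin qmax q) x <->
     segment q (u_left n qmin + u_right n mubar qmin qmax - q) x) /\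
  (exists x, segment q (u_left n qmin + u_right n mubar qmin qmax - q) x) /\
  (forall x : 'rV[R]_(n.+2),
     segment q (u_left n qmin + u_right n mubar qmin qmax - q) x ->
     inL x /\ xcoord q n.+2 <= xcoord x n.+2).
Proof.
case: hqL => y ->{q} in hq1 hq2 *.
rewrite /mu_q /Pminus /u_right /u_left !pt2_xd in hq1 hq2 *.
set D := qmax - qmin.
set c := 1 - mubar.
have Dp : 0 < D by rewrite /D subr_gt0.
have cp : 0 < c by rewrite /c subr_gt0.
have c2 : c <= 1/2 by rewrite /c; lra.
set K := D / c.
have KD : 2 * D <= K.
  rewrite /K ler_pdivlMr //. nra.
have Kp : 0 < K by lra.
set Y := y - qmin.
have Y0 : 0 <= Y by rewrite /Y; lra.
have YD : Y <= D by rewrite /D /Y; lra.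
have muE : 1 - (y - qmin) * (1 - mubar) / (qmax - qmin) = 1 - Y / K.
  rewrite /K /Y /D /c; congr (_ - _); field.
  by apply/andP; split; [rewrite -/c gt_eqF | rewrite -/D gt_eqF].
rewrite muE.
have YK : Y / K <= 1/2.
  rewrite ler_pdivrMr //; lra.
have YK0 : 0 <= Y / K by apply: divr_ge0 => //; lra.
have Kf : K != 0 by rewrite gt_eqF.
have YKK : Y / K * K = Y by rewrite divfK.
have YKc : Y / K <= c.
  have -> : Y / K = Y / D * c by rewrite /K; field; rewrite !gt_eqF.
  have : Y / D <= 1 by rewrite ler_pdivrMr //; lra.
  nra.
split; first by rewrite /c in YKc; lra.
rewrite pt2_sub.
have -> : (2 + 2 - 2 : R) = 2 by ring.
set r := Y / K in YK YK0 YKK YKc *.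
have yE : y = qmin + r * K by rewrite YKK /Y; ring.
have segE : forall x, segment (pt2 n 2 y) (pt2 n 2 (qmin + (qmin + K) - y)) x <->
   exists t, 0 <= t <= 1 /\ x = pt2 n 2 (y + t * K * (1 - 2 * r)).
  move=> x; split => -[t [ht ->]]; exists t; split => //; rewrite pt2_lin;
  congr pt2; rewrite ?yE; ring.
have neq : pt2 n 2 qmin != pt2 n 2 (qmin + K).
  by apply/eqP => /pt2_inj; lra.
have neq' := neq; rewrite eq_sym in neq'.
have udE : undup [:: pt2 n 2 qmin; pt2 n 2 (qmin + K)] =
   [:: pt2 n 2 qmin; pt2 n 2 (qmin + K)].
  by rewrite /= inE (negbTE neq).
split; last split.
- move=> x; rewrite segE; split.
  + case=> alpha [hal]; rewrite udE !big_cons !big_nil !addr0 => hsum ->.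
    have := hal _ (mem_head _ _).
    have := hal (pt2 n 2 (qmin + K)); rewrite !inE eqxx orbT => /(_ isT).
    set a := alpha (pt2 n 2 qmin).
    have -> : alpha (pt2 n 2 (qmin + K)) = 1 - a by rewrite -[in RHS]hsum /a addrAC subrr add0r.
    move=> /andP[b1 b2] /andP[a1 a2].
    rewrite pt2_lin.
    have [r2'|r2] := ltP 0 (1 - 2 * r); last first.
      have r2e : r = 1/2 by lra.
      exists 0; split; first by rewrite lexx ler01.
      congr pt2; first by ring.
      rewrite yE r2e.
      have ha : a = 1/2 by lra.
      by rewrite ha; field.
    have hu : (1 - a - r) / (1 - 2 * r) * (1 - 2 * r) = 1 - a - r.
      by rewrite divfK // gt_eqF.
    move: ((1 - a - r) / (1 - 2 * r)) hu => u hu.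
    exists u; split.
      apply/andP; split.
        nra.
      nra.
    congr pt2; first by ring.
    have -> : u * K * (1 - 2 * r) = K * (u * (1 - 2 * r)) by ring.
    by rewrite hu yE; ring.
  + case=> t [/andP[t0 t1] ->].
    pose a := 1 - r - t * (1 - 2 * r).
    exists (fun p => if p == pt2 n 2 qmin then a else 1 - a); split.
    * move=> p; rewrite !inE => /orP[/eqP->|/eqP->];
        rewrite ?eqxx ?(negbTE neq') /a; apply/andP; split; nra.
    * by rewrite udE !big_cons !big_nil eqxx (negbTE neq'); ring.
    * rewrite udE !big_cons !big_nil eqxx (negbTE neq') addr0 pt2_lin.
      congr pt2; rewrite /a ?yE; ring.
- exists (pt2 n 2 y); apply/segE; exists 0; split; first by rewrite lexx ler01.
  congr pt2; ring.
- move=> x /segE [t [/andP[t0 t1] ->]]; split; first by exists (y + t * K * (1 - 2 * r)).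
  rewrite !pt2_xd.
  have : 0 <= t * K by apply: mulr_ge0; lra.
  nra.
Qed.
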